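(* Let $n \ge 1$ be an integer, let $X_1,\dots,X_n$ be i.i.d. Bernoulli random variables with $\Pr\{X_i=1\}=p\in(0,1)$, and let $K=\sum_{i=1}^n X_i$. For $\delta\in(0,1)$ define \[ L_{n,\delta} = \frac{K}{n} + \frac{3}{4}\,\frac{1-\frac{2K}{n}-\sqrt{1+\frac{9}{2\ln\frac{2}{\delta}}\,K\left(1-\frac{K}{n}\right)}}{1+\frac{9n}{8\ln\frac{2}{\delta}}},\qquad U_{n,\delta} = \frac{K}{n} + \frac{3}{4}\,\frac{1-\frac{2K}{n}+\sqrt{1+\frac{9}{2\ln\frac{2}{\delta}}\,K\left(1-\frac{K}{n}\right)}}{1+\frac{9n}{8\ln\frac{2}{\delta}}}. \] Then for any fixed $n$ and $p\in(0,1)$, the coverage probability of the confidence interval $[L_{n,\delta},U_{n,\delta}]$, i.e. $\Pr\{L_{n,\delta}\le p\le U_{n,\delta}\mid p\}$, decreases as $\delta$ increases.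
   Context: $\Pr\{\cdot\mid p\}$ denotes probability when the Bernoulli parameter equals $p$, so that $K$ is binomially distributed with parameters $n$ and $p$. *)

(* Defs.v *)
From Stdlib Require Import Reals.
Open Scope R_scope.

Definition Lbound (n : nat) (delta : R) (k : nat) : R :=
  let K := INR k in
  let N := INR n in
  let c := ln (2 / delta) in
  K / N + 3 / 4 *
    ((1 - 2 * K / N - sqrt (1 + 9 / (2 * c) * K * (1 - K / N)))
     / (1 + 9 * N / (8 * c))).

Definition Ubound (n : nat) (delta : R) (k : nat) : R :=
  let K := INR k in
  let N := INR n in
  let c := ln (2 / delta) in
  K / N + 3 / 4 *
    ((1 - 2 * K / N + sqrt (1 + 9 / (2 * c) * K * (1 - K / N)))
     / (1 + 9 * N / (8 * c))).

Definition binom_pmf (n : nat) (p : R) (k : nat) : R :=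
  C n k * p ^ k * (1 - p) ^ (n - k).

Definition covers (n : nat) (delta p : R) (k : nat) : R :=
  if Rle_dec (Lbound n delta k) p then
    if Rle_dec p (Ubound n delta k) then 1 else 0
  else 0.

(* Coverage probability Pr{ L_{n,delta} <= p <= U_{n,delta} | p },
   K ~ Binomial(n, p); sum over k = 0..n (sum_f_R0 f n has n+1 terms). *)
Definition coverage (n : nat) (delta p : R) : R :=
  sum_f_R0 (fun k => binom_pmf n p k * covers n delta p k) n.

(* Main.v *)
Require Import Defs.
From Stdlib Require Import Reals Lra Psatz.
Open Scope R_scope.

Lemma prod_iff (L U p : R) : L <= U -> ((L <= p <= U) <-> (p - L) * (p - U) <= 0).
Proof.
  intros H; split.
  - intros [H1 H2]. assert (0 <= p - L) by lra. assert (p - U <= 0) by lra. nra.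
  - intros H1. destruct (Rle_dec L p); destruct (Rle_dec p U); try lra.
    + assert (0 < p - U) by lra. assert (0 < p - L) by lra. nra.
    + assert (p - L < 0) by lra. assert (p - U < 0) by lra. nra.
Qed.

Lemma alg (x b r p : R) : 0 < 1 + b -> r * r = 1 + 4 * b * x * (1 - x) ->
  (1 + b) * ((p - (x + 3/4 * ((1 - 2 * x - r) / (1 + b)))) *
             (p - (x + 3/4 * ((1 - 2 * x + r) / (1 + b))))) =
  (1 + b) * (p - x)^2 - 3/2 * (1 - 2 * x) * (p - x) - 9/4 * x * (1 - x).
Proof.
  intros Hb Hr.
  set (s := / (1 + b)).
  assert (Hs : (1 + b) * s = 1) by (unfold s; field; lra).
  unfold Rdiv. fold s.
  transitivity ((1+b) * (p-x)^2 - 3/2*(1-2*x)*(p-x)*((1+b)*s)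
         + 9/16 * ((1-2*x)^2 - r*r) * ((1+b)*s) * s).
  { clearbody s. field. }
  rewrite Hs, Hr.
  replace ((1 - 2 * x) ^ 2 - (1 + 4 * b * x * (1 - x))) with (- 4 * x * (1-x) * (1+b)) by field.
  replace (9 / 16 * (- 4 * x * (1 - x) * (1 + b)) * 1 * s) with
     (- 9/4 * x * (1-x) * ((1+b)*s)) by field.
  rewrite Hs. field.
Qed.

Definition g (x b p : R) := (1 + b) * (p - x)^2 - 3/2 * (1 - 2 * x) * (p - x) - 9/4 * x * (1 - x).

Lemma member (K N c p : R) : 0 < N -> 0 <= K <= N -> 0 < c ->
  let r := sqrt (1 + 9 / (2 * c) * K * (1 - K / N)) in
  let L := K / N + 3 / 4 * ((1 - 2 * K / N - r) / (1 + 9 * N / (8 * c))) in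
  let U := K / N + 3 / 4 * ((1 - 2 * K / N + r) / (1 + 9 * N / (8 * c))) in
  (L <= p <= U <-> g (K/N) (9 * N / (8 * c)) p <= 0).
Proof.
  intros HN HK Hc r L U.
  set (x := K / N). set (b := 9 * N / (8 * c)).
  assert (Hb : 0 < b) by (unfold b; apply Rdiv_lt_0_compat; lra).
  assert (Hx : 0 <= x <= 1).
  { unfold x; split. apply Rmult_le_pos; [lra| left; apply Rinv_0_lt_compat; lra].
    apply (Rmult_le_reg_r N); [lra|]. unfold Rdiv. rewrite Rmult_assoc, Rinv_l; lra. }
  assert (HD : 1 + 9 / (2 * c) * K * (1 - K / N) = 1 + 4 * b * x * (1 - x)).
  { unfold b, x. field. lra. }
  assert (Hr0 : 0 <= r) by apply sqrt_pos.
  assert (Hrr : r * r = 1 + 4 * b * x * (1 - x)).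
  { unfold r. rewrite HD. apply sqrt_sqrt. assert (0 <= x * (1 - x)) by nra. assert (0 <= b * (x * (1 - x))) by (apply Rmult_le_pos; lra). nra. }
  assert (HL : L = x + 3/4 * ((1 - 2 * x - r) / (1 + b))).
  { unfold L, x, b. replace (2 * K / N) with (2 * (K / N)) by (field; lra). reflexivity. }
  assert (HU : U = x + 3/4 * ((1 - 2 * x + r) / (1 + b))).
  { unfold U, x, b. replace (2 * K / N) with (2 * (K / N)) by (field; lra). reflexivity. }
  assert (HLU : L <= U).
  { rewrite HL, HU. unfold Rdiv.
    assert (0 < / (1 + b)) by (apply Rinv_0_lt_compat; lra). nra. }
  rewrite (prod_iff L U p HLU).
  unfold g. rewrite <- (alg x b r p) by (lra || exact Hrr).
  rewrite <- HL, <- HU. fold x b.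
  split; intro H.
  - assert (0 < 1 + b) by lra. nra.
  - destruct (Rle_dec ((p - L) * (p - U)) 0); auto.
    assert (0 < 1 + b) by lra. nra.
Qed.

Lemma my_ln_gt_0 (y : R) : 1 < y -> 0 < ln y.
Proof. intros H. rewrite <- ln_1. apply ln_increasing; lra. Qed.

Lemma my_ln_le (x y : R) : 0 < x -> x <= y -> ln x <= ln y.
Proof. intros H1 [H2|H2]. left; apply ln_increasing; lra. subst; lra. Qed.

Lemma covers_mono (n : nat) (p d1 d2 : R) (k : nat) :
  (1 <= n)%nat -> (k <= n)%nat -> 0 < d1 < 1 -> 0 < d2 < 1 -> d1 <= d2 ->
  covers n d2 p k <= covers n d1 p k.
Proof.
  intros Hn Hk H1 H2 H12.
  assert (HN : 0 < INR n) by (apply lt_0_INR; lia).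
  assert (HK : 0 <= INR k <= INR n) by (split; [apply pos_INR | apply le_INR; lia]).
  assert (Hc1 : 0 < ln (2 / d1)).
  { apply my_ln_gt_0. apply (Rmult_lt_reg_r d1); [lra|]. unfold Rdiv.
    rewrite Rmult_assoc, Rinv_l; lra. }
  assert (Hc2 : 0 < ln (2 / d2)).
  { apply my_ln_gt_0. apply (Rmult_lt_reg_r d2); [lra|]. unfold Rdiv.
    rewrite Rmult_assoc, Rinv_l; lra. }
  assert (Hc12 : ln (2 / d2) <= ln (2 / d1)).
  { apply my_ln_le. apply Rdiv_lt_0_compat; lra.
    unfold Rdiv. apply Rmult_le_compat_l; [lra|]. apply Rinv_le_contravar; lra. }
  assert (Hb : 9 * INR n / (8 * ln (2 / d1)) <= 9 * INR n / (8 * ln (2 / d2))).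
  { unfold Rdiv. apply Rmult_le_compat_l; [lra|]. apply Rinv_le_contravar; lra. }
  assert (Hg : forall p, g (INR k / INR n) (9 * INR n / (8 * ln (2 / d1))) p <=
                  g (INR k / INR n) (9 * INR n / (8 * ln (2 / d2))) p).
  { intros q. unfold g. assert (0 <= (q - INR k / INR n)^2) by (apply pow2_ge_0). nra. }
  unfold covers.
  pose proof (member (INR k) (INR n) _ p HN HK Hc1) as M1.
  pose proof (member (INR k) (INR n) _ p HN HK Hc2) as M2.
  cbv zeta in M1, M2.
  unfold Lbound, Ubound. cbv zeta.
  destruct (Rle_dec _ p) as [a|a]; destruct (Rle_dec p _) as [b|b];
  destruct (Rle_dec _ p) as [c|c]; try destruct (Rle_dec p _) as [d|d]; try lra.
  - exfalso. apply d. apply M1. specialize (Hg p). apply proj1 in M2.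
    pose proof (M2 (conj a b)). lra.
  - exfalso. apply c. apply M1. specialize (Hg p). apply proj1 in M2.
    pose proof (M2 (conj a b)). lra.
Qed.

Theorem theorem1 (n : nat) (p delta1 delta2 : R) :
  (1 <= n)%nat -> 0 < p < 1 ->
  0 < delta1 < 1 -> 0 < delta2 < 1 -> delta1 <= delta2 ->
  coverage n delta2 p <= coverage n delta1 p.
Proof.
  intros Hn Hp H1 H2 H12. unfold coverage.
  apply sum_Rle. intros k Hk.
  apply Rmult_le_compat_l.
  - unfold binom_pmf. apply Rmult_le_pos; [apply Rmult_le_pos|].
    + unfold C. unfold Rdiv. apply Rmult_le_pos; [apply pos_INR|].
      left; apply Rinv_0_lt_compat, Rmult_lt_0_compat; apply INR_fact_lt_0.
    + apply pow_le; lra.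
    + apply pow_le; lra.
  - apply covers_mono; auto.
Qed.
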